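(* Fix a time $t$. Let $\hat{\mathcal Z}_t$, $\hat{\mathcal Z}_{t+1}$ be Banach spaces, let $\mathfrak F_{\mathcal Y}$ and $\mathfrak F_{\hat{\mathcal Z}_{t+1}}$ be classes of uniformly bounded measurable real functions on $\mathcal Y$ and on $\hat{\mathcal Z}_{t+1}$ respectively, and let $\delta_t>0$. Let $\hat\sigma_t:\mathcal H_t\to\hat{\mathcal Z}_t$ and $\hat\sigma_{t+1}:\mathcal H_{t+1}\to\hat{\mathcal Z}_{t+1}$ be measurable history compression functions. Suppose: (AP2a) there is a measurable update function $\hat\varphi_t:\hat{\mathcal Z}_t\times\mathcal Y\times\mathcal A\to\hat{\mathcal Z}_{t+1}$ such that for every realization $h_{t+1}=(h_t,y_t,a_t)$ of $H_{t+1}$, $\hat\sigma_{t+1}(h_{t+1})=\hat\varphi_t(\hat\sigma_t(h_t),y_t,a_t)$; (AP2b) there is a measurable kernel $\hat P^y_t:\hat{\mathcal Z}_t\times\mathcal A\to\Delta(\mathcal Y)$ such that for every realization $h_t$ of $H_t$ and every $a_t\in\mathcal A$, setting $\mu^y_t(B)=\mathbb P(Y_t\in B\mid H_t=h_t,A_t=a_t)$ and $\nu^y_t(B)=\hat P^y_t(B\mid\hat\sigma_t(h_t),a_t)$ for Borel $B\subseteq\mathcal Y$, we have $d_{\mathfrak F_{\mathcal Y}}(\mu^y_t,\nu^y_t)\le \delta_t/\kappa_t$, where $\kappa_t=\sup_{h_t\in\mathcal H_t,\,a_t\in\mathcal A}\kappa_{\mathfrak F_{\mathcal Y},\mathfrak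 F_{\hat{\mathcal Z}_{t+1}}}\big(\hat\varphi_t(\hat\sigma_t(h_t),\cdot,a_t)\big)$. Define the kernel $\hat P_t:\hat{\mathcal Z}_t\times\mathcal A\to\Delta(\hat{\mathcal Z}_{t+1})$ by $\hat P_t(B\mid\hat\sigma_t(h_t),a_t)=\int_{\mathcal Y}\mathbf 1_B\big(\hat\varphi_t(\hat\sigma_t(h_t),y,a_t)\big)\,\hat P^y_t(dy\mid\hat\sigma_t(h_t),a_t)$ for Borel $B\subseteq\hat{\mathcal Z}_{t+1}$. Then (AP2) holds: for every realization $h_t$ of $H_t$ and every $a_t\in\mathcal A$, with $\mu_t(B)=\mathbb P(\hat\sigma_{t+1}(H_{t+1})\in B\mid H_t=h_t,A_t=a_t)$ and $\nu_t(B)=\hat P_t(B\mid\hat\sigma_t(h_t),a_t)$, we have $d_{\mathfrak F_{\hat{\mathcal Z}_{t+1}}}(\mu_t,\nu_t)\le\delta_t$.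
   Context: Setting: a stochastic input-output system over a finite horizon $t=1,\dots,T$. At each time $t$ an agent chooses an action $A_t$ in an action space $\mathcal A$; the system then produces an observation $Y_t$ in a measurable space $\mathcal Y$ and a real reward $R_t$. The history is $H_1=\emptyset$ and $H_{t+1}=(H_t,Y_t,A_t)$, i.e. $H_t=(Y_{1:t-1},A_{1:t-1})$, taking values in $\mathcal H_t$; the conditional law of $(Y_t,R_t)$ given $(H_t,A_t)$ is fixed by the system. Integral probability metric: for a class $\mathfrak F$ of uniformly bounded measurable real functions on a measurable space $\mathcal X$ and probability measures $\mu,\nu$ on $\mathcal X$, $d_{\mathfrak F}(\mu,\nu)=\sup_{f\in\mathfrak F}\left|\int f\,d\mu-\int f\,d\nu\right|$. Minkowski functional: $\rho_{\mathfrak F}(f)=\inf\{\rho>0:\rho^{-1}f\in\mathfrak F\}$. Contraction factor: for $\ell:\mathcal X\to\mathcal X'$ and function classes $\mathfrak F_{\mathcal X}$ on $\mathcal X$, $\mathfrak F_{\mathcal X'}$ on $\mathcal X'$, $\kappa_{\mathfrak F_{\mathcal X},\mathfrak F_{\mathcal X'}}(\ell)=\sup_{f\in\mathfrak F_{\mathcal X'}}\rho_{\mathfrak F_{\mathcal X}}(f\circ\ell)$. *)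

(* Defs.v *)
From HB Require Import structures.
From mathcomp Require Import all_boot all_order all_algebra.
From mathcomp Require Import all_classical all_reals all_analysis.

Set Implicit Arguments.
Unset Strict Implicit.
Unset Printing Implicit Defensive.

Import Order.TTheory GRing.Theory Num.Theory.
Local Open Scope classical_set_scope.
Local Open Scope ring_scope.

Section section3.
Context d1 d2 d3 d4 (Z : measurableType d1) (Y : measurableType d2)
  (A : measurableType d3) (W : measurableType d4).
Variables (phi : {mfun (Z * Y * A)%type >-> W}) (z : Z) (a : A).

Definition sect3 : Y -> W := fun y => phi (z, y, a).

Lemma sect3_measurable : measurable_fun [set: Y] sect3.
Proof.
apply: (measurableT_comp (@measurable_funPT _ _ _ _ phi)).
by apply: measurable_fun_pair => //; apply: measurable_fun_pair.
Qed.

HB.instance Definition _ := isMeasurableFun.Build _ _ _ _ sect3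
  sect3_measurable.
End section3.

Section push.
Local Open Scope ereal_scope.
Context d d' (T : measurableType d) (T' : measurableType d') (R : realType).
Variables (m : {measure set T -> \bar R}) (f : {mfun T >-> T'}).

Definition push : set T' -> \bar R := pushforward m f.

Let push0 : push set0 = 0.
Proof. exact: measure0. Qed.
Let push_ge0 B : 0 <= push B.
Proof. exact: measure_ge0. Qed.
Let push_sigma_additive : semi_sigma_additive push.
Proof. exact: measure_semi_sigma_additive. Qed.

HB.instance Definition _ := isMeasure.Build _ _ _ push
  push0 push_ge0 push_sigma_additive.
End push.

Definition ipm_dist d (X : measurableType d) (R : realType) (F : set (X -> R))
  (mu nu : {measure set X -> \bar R}) : \bar R :=
  ereal_sup [set `| (\int[mu]_x (f x)%:E - \int[nu]_x (f x)%:E)%E |%E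
             | f in F].

(* Minkowski functional rho_F(f) = inf { rho > 0 : rho^-1 f \in F }
   (inf of the empty set is +oo). *)
Definition minkowski_fun (X : Type) (R : realType) (F : set (X -> R))
  (f : X -> R) : \bar R :=
  ereal_inf [set r%:E | r in [set r : R | 0 < r /\ F (fun x => r^-1 * f x)]].

Definition contraction_factor (X X' : Type) (R : realType) (FX : set (X -> R))
  (FX' : set (X' -> R)) (l : X -> X') : \bar R :=
  ereal_sup [set minkowski_fun FX (f \o l) | f in FX'].

Definition ubm_class d (X : measurableType d) (R : realType)
  (F : set (X -> R)) : Prop :=
  (forall f, F f -> measurable_fun [set: X] f) /\
  exists M : R, forall f, F f -> forall x, `|f x| <= M.

(* The kernel hat P_t of the statement: hat P_t(. | z, a) is the image of
   hat P^y_t(. | z, a) under y |-> hat phi_t(z, y, a). *)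
Definition hatP d1 d2 d3 d4 (Z : measurableType d1) (Y : measurableType d2)
  (A : measurableType d3) (W : measurableType d4) (R : realType)
  (Py : R.-pker (Z * A)%type ~> Y) (phi : {mfun (Z * Y * A)%type >-> W})
  (z : Z) (a : A) : {measure set W -> \bar R} :=
  push (Py (z, a)) (sect3 phi z a).

Lemma hatPE d1 d2 d3 d4 (Z : measurableType d1) (Y : measurableType d2)
  (A : measurableType d3) (W : measurableType d4) (R : realType)
  (Py : R.-pker (Z * A)%type ~> Y) (phi : {mfun (Z * Y * A)%type >-> W})
  (z : Z) (a : A) (B : set W) : measurable B ->
  hatP Py phi z a B = (\int[Py (z, a)]_y (\1_B (phi (z, y, a)))%:E)%E.
Proof.
move=> mB.
have mpre : measurable (sect3 phi z a @^-1` B).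
  by rewrite -[X in measurable X]setTI; exact: sect3_measurable.
rewrite (_ : (fun y => _) = (fun y => (\1_(sect3 phi z a @^-1` B) y)%:E)).
  by rewrite integral_indic // setIT.
by apply/funext => y; rewrite !indicE.
Qed.

(* Main.v *)
Require Import Defs.
From HB Require Import structures.
From mathcomp Require Import all_boot all_order all_algebra.
From mathcomp Require Import all_classical all_reals all_analysis.
From mathcomp Require Import ring lra.
Import Order.TTheory GRing.Theory Num.Theory.
Local Open Scope classical_set_scope.
Local Open Scope ring_scope.

Lemma bndP (R : realType) (T:Type) (f : T -> R) M : (forall x, `|f x| <= M) -> [bounded f x | x in [set: T]].
Proof.
move=> bf; rewrite /bounded_near.
near=> M' => x _ /=.
apply: le_trans (bf x) _.
near: M'; exact: nbhs_pinfty_ge (num_real M).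
Unshelve. all: by end_near.
Qed.

Lemma push_int d d' (T : measurableType d) (T' : measurableType d') (R : realType)
  (m : {measure set T -> \bar R}) (s : {mfun T >-> T'}) (f : T' -> R) (M : R) :
  (m [set: T] < +oo)%E -> measurable_fun [set: T'] f -> (forall x, `|f x| <= M) ->
  (\int[push m s]_x (f x)%:E = \int[m]_x (f (s x))%:E)%E.
Proof.
move=> mfin mf bf.
have mfs : measurable_fun [set: T] (f \o s).
  exact: measurableT_comp mf (@measurable_funPT _ _ _ _ s).
have intf : m.-integrable [set: T] (EFin \o (f \o s)).
  apply: measurable_bounded_integrable => //.
  exact: (@bndP R T (f \o s) M (fun x => bf (s x))).
rewrite /push (integral_pushforward (@measurable_funPT _ _ _ _ s)) //.
exact/measurable_realfun.measurable_EFinP.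
Qed.

Lemma bnd_int d (T : measurableType d) (R : realType)
  (m : {measure set T -> \bar R}) (g : T -> R) (M : R) :
  (m [set: T] < +oo)%E -> measurable_fun [set: T] g -> (forall x, `|g x| <= M) ->
  m.-integrable [set: T] (fun x => (g x)%:E).
Proof.
move=> mfin mg bg; apply: measurable_bounded_integrable => //.
exact: (@bndP R T g M bg).
Qed.
Arguments bnd_int {d T R m g M}.

Theorem mainTheorem1
  (R : realType)
  (dY dA dH dZ dZ1 : measure_display)
  (Y : measurableType dY) (A : measurableType dA) (Ht : measurableType dH)
  (Zt : measurableType dZ) (Zt1 : measurableType dZ1)
  (PY : Ht * A -> probability Y R)
  (FY : set (Y -> R)) (FZ1 : set (Zt1 -> R))
  (delta : R)
  (sigma_t : {mfun Ht >-> Zt})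
  (sigma_t1 : {mfun (Ht * Y * A)%type >-> Zt1})
  (phi : {mfun (Zt * Y * A)%type >-> Zt1})
  (hatPy : R.-pker (Zt * A)%type ~> Y) :
  ubm_class FY -> ubm_class FZ1 ->
  0 < delta ->
  (forall (h : Ht) (y : Y) (a : A),
      sigma_t1 (h, y, a) = phi (sigma_t h, y, a)) ->
  (ereal_sup [set contraction_factor FY FZ1 (sect3 phi (sigma_t p.1) p.2)
             | p in [set: Ht * A]] < +oo)%E ->
  (forall (h : Ht) (a : A),
      (ipm_dist FY (PY (h, a)) (hatPy (sigma_t h, a))
       <= delta%:E /
          ereal_sup [set contraction_factor FY FZ1 (sect3 phi (sigma_t p.1) p.2)
                    | p in [set: Ht * A]])%E) ->
  forall (h : Ht) (a : A),
    (ipm_dist FZ1 (push (PY (h, a)) (sect3 sigma_t1 h a))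
             (hatP hatPy phi (sigma_t h) a) <= delta%:E)%E.
Proof.
move=> [mFY [MY hMY]] [mFZ [MZ hMZ]] d0 hAP2a Kfin hAP2b h a.
move: Kfin (hAP2b h a).
set K := ereal_sup _ => Kfin hK.
have finPY : forall h a, (PY (h, a) [set: Y] < +oo)%E.
  by move=> h' a'; rewrite probability_setT ltry.
have finhP : forall z a, (hatPy (z, a) [set: Y] < +oo)%E.
  by move=> z a'; rewrite prob_kernel ltry.
rewrite /ipm_dist; apply: ub_ereal_sup => _ [f Ff <-].
pose g : Y -> R := fun y => f (phi (sigma_t h, y, a)).
have mg : measurable_fun [set: Y] g.
  exact: (measurableT_comp (mFZ f Ff) (sect3_measurable phi (sigma_t h) a)).
have bg : forall y, `|g y| <= MZ by move=> y; exact: hMZ.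
rewrite /hatP (@push_int _ _ _ _ _ _ _ _ _ (finPY h a) (mFZ f Ff) (hMZ f Ff)).
rewrite (@push_int _ _ _ _ _ _ _ _ _ (finhP (sigma_t h) a) (mFZ f Ff) (hMZ f Ff)) /sect3 /=.
have E1 : (fun x => (f (sect3 sigma_t1 h a x))%:E) = (fun x => (g x)%:E).
  by apply/funext => x; rewrite /g -hAP2a.
rewrite E1.
change (`| \int[PY (h, a)]_x (g x)%:E - \int[hatPy (sigma_t h, a)]_x (g x)%:E | <= delta%:E)%E.
pose rho := minkowski_fun FY (f \o sect3 phi (sigma_t h) a).
have rhoK : (rho <= K)%E.
  apply: (@le_trans _ _ (contraction_factor FY FZ1 (sect3 phi (sigma_t h) a))).
    by apply: ereal_sup_ubound; exists f.
  by apply: ereal_sup_ubound; exists (h, a).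
have rho0 : (0 <= rho)%E.
  by apply: le_ereal_inf_tmp => _ [r [r0 _] <-]; rewrite lee_fin ltW.
have K0 : (0 <= K)%E := le_trans rho0 rhoK.
have Kf : K \is a fin_num by rewrite ge0_fin_numE.
move: (fineK Kf) => Kk; set k := fine K in Kk.
have k0 : 0 <= k by rewrite -lee_fin Kk.
have [k_gt0|k_le0] := ltrP 0 k; last first.
  have rho_le0 : (rho <= 0)%E by rewrite (le_trans rhoK) // -Kk lee_fin.
  have g0 : forall y, g y = 0.
    move=> y; apply/normr0_eq0/eqP; rewrite eq_le normr_ge0 andbT.
    apply/ler_addgt0Pr => e e0; rewrite add0r.
    have MY0 : 0 <= `|MY| := normr_ge0 _.
    have q0 : 0 < e / (`|MY| + 1) by rewrite divr_gt0 //; lra.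
    have qe : e / (`|MY| + 1) * (`|MY| + 1) = e by rewrite mulfVK //; lra.
    move: (e / (`|MY| + 1)) q0 qe => q q0 qe.
    have : (rho < q%:E)%E by apply: le_lt_trans rho_le0 _; rewrite lte_fin.
    rewrite /rho /minkowski_fun => /ereal_inf_lt [_ [r [r0 Fr] <-]].
    rewrite lte_fin => rq.
    have := hMY _ Fr y.
    change (`|r^-1 * g y| <= MY -> `|g y| <= e).
    have ri0 : 0 <= r^-1 by rewrite invr_ge0 ltW.
    rewrite normrM (ger0_norm ri0) => H.
    rewrite -(ler_pM2l r0) mulrA mulfV ?mul1r in H; last by rewrite gt_eqF.
    have := ler_norm MY; nra.
  have -> : (fun x => (g x)%:E) = cst 0%E by apply/funext => y; rewrite g0.
  by rewrite !integral0 sube0 abse0 lee_fin ltW.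
have fin1 : (\int[PY (h, a)]_x (g x)%:E)%E \is a fin_num.
  exact: (integrable_fin_num measurableT (bnd_int (finPY h a) mg bg)).
have fin2 : (\int[hatPy (sigma_t h, a)]_x (g x)%:E)%E \is a fin_num.
  exact: (integrable_fin_num measurableT (bnd_int (finhP (sigma_t h) a) mg bg)).
have int1 := bnd_int (finPY h a) mg bg.
have int2 := bnd_int (finhP (sigma_t h) a) mg bg.
have hr : forall r, 0 < r -> FY (fun x => r^-1 * g x) ->
   ((`|fine (\int[PY (h, a)]_x (g x)%:E)%E - fine (\int[hatPy (sigma_t h, a)]_x (g x)%:E)%E| * r^-1)%:E
     <= ipm_dist FY (PY (h, a)) (hatPy (sigma_t h, a)))%E.
  move=> r r0 Fr; apply: ereal_sup_ubound; exists (fun x => r^-1 * g x) => //=.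
  under [X in (X - _)%E]eq_integral do rewrite EFinM.
  under [X in (_ - X)%E]eq_integral do rewrite EFinM.
  rewrite (integralZl measurableT int1) (integralZl measurableT int2).
  rewrite -(fineK fin1) -(fineK fin2) -!EFinM -EFinB /= -mulrBr normrM.
  by rewrite (ger0_norm (_ : 0 <= r^-1)) ?invr_ge0 ?ltW // mulrC.
move: hr; rewrite -(fineK fin1) -(fineK fin2) /=.
move: (fine _) (fine _) => c1 c2 hr.
rewrite lee_fin.
set D := `|_ - _|.
rewrite -Kk inver (gt_eqF k_gt0) -EFinM in hK.
have LB : ((D * k / delta)%:E <= rho)%E.
  apply: le_ereal_inf_tmp => _ [r [r0 Fr] <-]; rewrite lee_fin.
  have := le_trans (hr r r0 Fr) hK; rewrite lee_fin => H.
  rewrite ler_pdivrMr //.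
  have := ler_wpM2r (ltW (mulr_gt0 r0 k_gt0)) H.
  have e1 : D / r * (r * k) = D * k by field; rewrite gt_eqF.
  have e2 : delta * k^-1 * (r * k) = r * delta by field; rewrite gt_eqF.
  by rewrite e1 e2.
have := le_trans LB rhoK; rewrite -Kk lee_fin ler_pdivrMr // => H.
by rewrite -(ler_pM2l k_gt0) mulrC.
Qed.
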